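(* Let $(S,A,T,s_1)$ be a finite MDP, let $\pi_E$ be a deterministic expert policy whose induced Markov chain $P_E$ on $S$ is irreducible and aperiodic, with stationary state-action distribution $\rho^E$ and mixing time $\tau_{\mathrm{mix}}$. Let $\eta>0$ and $\delta\in(0,1)$, and suppose the expert dataset is obtained from an expert trajectory $s_1,a_1,\dots,s_N,a_N$ of length $$N \;\ge\; \max\Big\{800|S|,\; 450\log\big(\tfrac{2}{\delta}\big)\Big\}\,\tau_{\mathrm{mix}}^3\,\eta^{-2}.$$ Let $D$ be the set of state-action pairs visited in this trajectory, let $R_{\mathrm{int}}(s,a)=\mathbb{1}\{(s,a)\in D\}$, and let $\pi_I$ be an imitation policy that maximizes the expected per-step intrinsic reward $\mathbb{E}_{\rho^{\pi}}[R_{\mathrm{int}}]$ over stationary policies (in particular $\mathbb{E}_{\rho^{I}}[R_{\mathrm{int}}]\ge \mathbb{E}_{\rho^{E}}[R_{\mathrm{int}}]$), and whose induced Markov chain is irreducible and aperiodic, with stationary state-action distribution $\rho^I$. Then, with probability at least $1-\delta$ over the generation of the expert trajectory, $$\|\rho^E-\rho^I\|_{\mathrm{TV}}\le \eta,$$ and, with the same probability, simultaneously for every reward function $R:S\times A\to[0,1]$, $$\mathbb{E}_{\rho^I}[R]\;\ge\;\mathbb{E}_{\rho^E}[R]-\eta.$$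
   Context: A finite MDP has finite state space $S$, finite action space $A$, transition kernel $T(\cdot\mid s,a)$ and initial state $s_1$. A stationary policy $\pi$ maps each state to a distribution $\pi(\cdot\mid s)$ over $A$; it induces the Markov chain on $S$ with $P_\pi(s,s')=\sum_a \pi(a\mid s)T(s'\mid s,a)$. If $P_\pi$ is irreducible and aperiodic it has a unique stationary distribution $\rho^\pi_S$ on $S$, and we write $\rho^\pi(s,a)=\rho^\pi_S(s)\pi(a\mid s)$ for the stationary state-action distribution; the expected per-step reward of $\pi$ for a reward $R$ is $\mathbb{E}_{\rho^\pi}[R]=\sum_{s,a}\rho^\pi(s,a)R(s,a)$. For the expert, $P_E=P_{\pi_E}$, $\rho^E_S=\rho^{\pi_E}_S$, $\rho^E=\rho^{\pi_E}$; for the imitation learner $\rho^I=\rho^{\pi_I}$. The total variation distance between distributions on a finite set $X$ is $\|\rho_1-\rho_2\|_{\mathrm{TV}}=\sup_{M\subseteq X}|\rho_1(M)-\rho_2(M)|$. The mixing time $\tau_{\mathrm{mix}}$ of $P_E$ is the smallest integer $t\ge 0$ such that $\max_{s'\in S}\|\mathbb{1}(s')^\top P_E^t-\rho^E_S\|_{\mathrm{TV}}\le \tfrac14$, where $\mathbb{1}(s')$ is the indicator (point mass) vector of $s'$. The expert trajectory is generated by running $\pi_E$ in the MDP. *)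

(* Defs.v *)
From HB Require Import structures.
From mathcomp Require Import all_boot all_order all_algebra.
From mathcomp Require Import boolp reals exp.
Set Implicit Arguments. Unset Strict Implicit. Unset Printing Implicit Defensive.
Import Order.TTheory GRing.Theory Num.Theory.
Local Open Scope ring_scope.

Section MDP.
Variables (R : realType) (S A : finType).

(* transition kernel T s a s' = T(s' | s, a) *)
Definition is_kernel (T : S -> A -> S -> R) : Prop :=
  (forall s a s', 0 <= T s a s') /\ (forall s a, \sum_(s' : S) T s a s' = 1).

(* stationary (randomized) policy pol s a = pi(a | s) *)
Definition is_policy (pol : S -> A -> R) : Prop :=
  (forall s a, 0 <= pol s a) /\ (forall s, \sum_(a : A) pol s a = 1).

Definition det_pol (piE : S -> A) : S -> A -> R :=
  fun s a => (a == piE s)%:R.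

Definition Pmat (T : S -> A -> S -> R) (pol : S -> A -> R) : S -> S -> R :=
  fun s s' => \sum_(a : A) pol s a * T s a s'.

Fixpoint Ppow (P : S -> S -> R) (n : nat) : S -> S -> R :=
  match n with
  | 0 => fun s s' => (s == s')%:R
  | n'.+1 => fun s s' => \sum_(u : S) Ppow P n' s u * P u s'
  end.

Definition irreducible (P : S -> S -> R) : Prop :=
  forall s s', exists n : nat, 0 < Ppow P n s s'.

Definition aperiodic (P : S -> S -> R) : Prop :=
  forall s (d : nat),
    (forall n : nat, (0 < n)%N -> 0 < Ppow P n s s -> (d %| n)%N) -> d = 1%N.

Definition is_stationary (P : S -> S -> R) (rho : S -> R) : Prop :=
  (forall s, 0 <= rho s) /\ \sum_(s : S) rho s = 1 /\
  (forall s', \sum_(s : S) rho s * P s s' = rho s').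

Definition sa_dist (rho : S -> R) (pol : S -> A -> R) : S * A -> R :=
  fun p => rho p.1 * pol p.1 p.2.

Definition expect (rho : S -> R) (pol : S -> A -> R) (Rw : S -> A -> R) : R :=
  \sum_(s : S) \sum_(a : A) rho s * pol s a * Rw s a.

End MDP.

Definition tv {R : realType} {X : finType} (r1 r2 : X -> R) : R :=
  \big[Num.max/0]_(M : {set X}) `|\sum_(x in M) r1 x - \sum_(x in M) r2 x|.

Definition mixing_ok {R : realType} {S : finType} (P : S -> S -> R) (rho : S -> R)
  (t : nat) : Prop :=
  forall s' : S, tv (fun u => Ppow P t s' u) rho <= 1 / 4.

Definition is_mixing_time {R : realType} {S : finType} (P : S -> S -> R)
  (rho : S -> R) (tau : nat) : Prop :=
  mixing_ok P rho tau /\ (forall t, (t < tau)%N -> ~ mixing_ok P rho t).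

(* probability of the state sequence x = (s_1, ..., s_N) when running the
   deterministic expert piE from s1 (actions are a_i = piE s_i) *)
Definition traj_prob {R : realType} {S A : finType} (T : S -> A -> S -> R) (s1 : S)
  (piE : S -> A) (N : nat) (x : N.-tuple S) : R :=
  (nth s1 x 0 == s1)%:R *
  \prod_(1 <= k < N) T (nth s1 x k.-1) (piE (nth s1 x k.-1)) (nth s1 x k).

(* intrinsic reward: indicator of the state-action pairs visited in the
   trajectory, D = {(s_i, piE s_i)} *)
Definition Rint {R : realType} {S A : finType} (piE : S -> A) (N : nat)
  (x : N.-tuple S) : S -> A -> R :=
  fun s a => ((s \in x) && (a == piE s))%:R.

Definition maximizes {R : realType} {S A : finType} (T : S -> A -> S -> R)
  (Rw : S -> A -> R) (piI : S -> A -> R) (rhoI : S -> R) : Prop :=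
  forall (pol : S -> A -> R) (rho : S -> R),
    is_policy pol -> irreducible (Pmat T pol) -> aperiodic (Pmat T pol) ->
    is_stationary (Pmat T pol) rho ->
    expect rho pol Rw <= expect rhoI piI Rw.

Definition good_event {R : realType} {S A : finType} (T : S -> A -> S -> R)
  (piE : S -> A) (rhoE : S -> R) (eta : R) (N : nat) (x : N.-tuple S) : Prop :=
  forall (piI : S -> A -> R) (rhoI : S -> R),
    is_policy piI -> irreducible (Pmat T piI) -> aperiodic (Pmat T piI) ->
    is_stationary (Pmat T piI) rhoI ->
    maximizes T (@Rint R S A piE N x) piI rhoI ->
    tv (sa_dist rhoE (@det_pol R S A piE)) (sa_dist rhoI piI) <= eta /\
    (forall Rw : S -> A -> R, (forall s a, 0 <= Rw s a <= 1) ->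
       expect rhoE (@det_pol R S A piE) Rw - eta <= expect rhoI piI Rw).

(* Main.v *)
Require Import Defs.
From HB Require Import structures.
From mathcomp Require Import all_boot all_order all_algebra.
From mathcomp Require Import boolp reals sequences exp.
From mathcomp Require Import ring lra zify.
Import Order.TTheory GRing.Theory Num.Theory.
Local Open Scope ring_scope.
Set Implicit Arguments. Unset Strict Implicit. Unset Printing Implicit Defensive.

Section Lp.
Variables (R : realType) (S : finType).
Implicit Types (v u : S -> R) (Q : S -> S -> R).

Definition Lp v : R := \sum_s Num.max (v s) 0.
Definition vmul v Q : S -> R := fun s' => \sum_s v s * Q s s'.
Definition stoch Q := (forall s s', 0 <= Q s s') /\ (forall s, \sum_s' Q s s' = 1).

Lemma maxE0 (x : R) : Num.max x 0 = if x < 0 then 0 else x.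
Proof. by []. Qed.

Lemma max0_ge0 (x : R) : 0 <= Num.max x 0.
Proof. rewrite maxE0; case: ltrP => h; lra. Qed.

Lemma max0_ge (x : R) : x <= Num.max x 0.
Proof. rewrite maxE0; case: ltrP => h; lra. Qed.

Lemma Lp_ge0 v : 0 <= Lp v.
Proof. by apply: sumr_ge0 => s _; exact: max0_ge0. Qed.

Lemma sum_le_Lp v (M : pred S) : \sum_(s | M s) v s <= Lp v.
Proof.
rewrite /Lp [X in _ <= X](bigID M) /= -[X in X <= _]addr0.
apply: lerD; first by apply: ler_sum => s _; exact: max0_ge.
by apply: sumr_ge0 => s _; exact: max0_ge0.
Qed.

Lemma Lp_pos v : Lp v = \sum_(s | 0 <= v s) v s.
Proof.
rewrite /Lp (bigID (fun s => 0 <= v s)) /= [X in _ + X]big1 ?addr0.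
  by apply: eq_bigr => s h; rewrite maxE0 ltNge h.
by move=> s; rewrite -ltNge => h; rewrite maxE0 h.
Qed.

Lemma max0_sub (x : R) : Num.max x 0 - Num.max (- x) 0 = x.
Proof.
rewrite !maxE0; case: ltrP => h1; case: ltrP => h2; lra.
Qed.

Lemma Lp_opp v : \sum_s v s = 0 -> Lp (fun s => - v s) = Lp v.
Proof.
move=> h; apply/eqP; rewrite -subr_eq0; apply/eqP.
rewrite /Lp -sumrB (eq_bigr (fun s => - v s)) ?sumrN ?h ?oppr0 // => s _.
rewrite !maxE0; case: ltrP => h1; case: ltrP => h2; lra.
Qed.

Lemma max0_add (x y : R) : Num.max (x + y) 0 <= Num.max x 0 + Num.max y 0.
Proof.
rewrite !maxE0; case: ltrP => h1; case: ltrP => h2; case: ltrP => h3; lra.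
Qed.

Lemma Lp_add u v : Lp (fun s => u s + v s) <= Lp u + Lp v.
Proof. by rewrite /Lp -big_split; apply: ler_sum => s _; exact: max0_add. Qed.

Lemma max0_le (x y : R) : x <= y -> Num.max x 0 <= Num.max y 0.
Proof.
move=> h; rewrite !maxE0; case: ltrP => h1; case: ltrP => h2; lra.
Qed.

Lemma Lp_le u v : (forall s, u s <= v s) -> Lp u <= Lp v.
Proof. by move=> h; apply: ler_sum => s _; apply: max0_le. Qed.

Lemma Lp_nneg v : (forall s, 0 <= v s) -> Lp v = \sum_s v s.
Proof. by move=> h; apply: eq_bigr => s _; rewrite maxE0 ltNge h. Qed.

Lemma Lp_ext u v : (forall s, u s = v s) -> Lp u = Lp v.
Proof. by move=> h; apply: eq_bigr => s _; rewrite h. Qed.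

Lemma Lp_contract v Q : stoch Q -> Lp (vmul v Q) <= Lp v.
Proof.
move=> [Q0 Q1].
apply: (@le_trans _ _ (Lp (vmul (fun s => Num.max (v s) 0) Q))).
  apply: Lp_le => z; apply: ler_sum => s _; apply: ler_wpM2r => //; exact: max0_ge.
rewrite Lp_nneg; last by move=> z; apply: sumr_ge0 => s _; rewrite mulr_ge0 // max0_ge0.
rewrite /vmul exchange_big /Lp le_eqVlt; apply/orP; left; apply/eqP.
by apply: eq_bigr => s _; rewrite -mulr_sumr Q1 mulr1.
Qed.

Lemma Lp_key v Q (D : R) (s0 : S) : stoch Q -> \sum_s v s = 0 ->
  (forall x y (M : pred S), \sum_(z | M z) Q x z - \sum_(z | M z) Q y z <= D) ->
  Lp (vmul v Q) <= D * Lp v.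
Proof.
move=> [Q0 Q1] v0 HD.
rewrite Lp_pos /vmul.
set M0 := (fun z => 0 <= \sum_s v s * Q s z).
rewrite exchange_big /=.
pose f := fun s => \sum_(z | M0 z) Q s z.
have -> : \sum_s \sum_(z | M0 z) v s * Q s z = \sum_s v s * f s.
  by apply: eq_bigr => s _; rewrite /f mulr_sumr.
pose xs := [arg min_(i < s0) f i]%O.
have fmin : forall s, f xs <= f s.
  by rewrite /xs; case: (arg_minP f (P := xpredT) (i0 := s0)) => // i _ H s; apply: H.
have -> : \sum_s v s * f s = \sum_s v s * (f s - f xs).
  under [RHS]eq_bigr do rewrite mulrBr.
  by rewrite sumrB -mulr_suml v0 mul0r subr0.
rewrite /Lp mulr_sumr; apply: ler_sum => s _.
have h1 : 0 <= f s - f xs by rewrite subr_ge0.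
have h2 : f s - f xs <= D by apply: HD.
apply: (@le_trans _ _ (Num.max (v s) 0 * (f s - f xs))).
  by apply: ler_wpM2r => //; exact: max0_ge.
by rewrite mulrC; apply: ler_wpM2r => //; exact: max0_ge0.
Qed.

End Lp.
Section Pow.
Variables (R : realType) (S : finType).
Implicit Types (v : S -> R) (P Q : S -> S -> R).

Lemma Ppow_add P m n s s' :
  Ppow P (m + n) s s' = \sum_u Ppow P m s u * Ppow P n u s'.
Proof.
elim: n s' => [|n IH] s'.
  rewrite addn0 /= (bigD1 s') //= eqxx mulr1 big1 ?addr0 // => u hu.
  by rewrite (negbTE hu) mulr0.
rewrite addnS /=.
under eq_bigr do rewrite IH mulr_suml.
rewrite exchange_big /=; apply: eq_bigr => u _.
by rewrite mulr_sumr; apply: eq_bigr => w _; rewrite mulrA.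
Qed.

Lemma Ppow1 P s s' : Ppow P 1 s s' = P s s'.
Proof.
rewrite /= (bigD1 s) //= eqxx mul1r big1 ?addr0 // => u hu.
by rewrite eq_sym (negbTE hu) mul0r.
Qed.

Lemma PpowSl P n s s' : Ppow P n.+1 s s' = \sum_u P s u * Ppow P n u s'.
Proof.
rewrite -add1n Ppow_add; apply: eq_bigr => u _; by rewrite Ppow1.
Qed.

Lemma Ppow_stoch P n : stoch P -> stoch (Ppow P n).
Proof.
move=> [P0 P1]; elim: n => [|n [IH0 IH1]].
  split=> [s s'|s] /=; first by rewrite ler0n.
  by rewrite (bigD1 s) //= eqxx big1 ?addr0 // => u hu; rewrite eq_sym (negbTE hu).
split=> [s s'|s] /=.
  by apply: sumr_ge0 => u _; rewrite mulr_ge0.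
rewrite exchange_big /= -(IH1 s); apply: eq_bigr => u _.
by rewrite -mulr_sumr P1 mulr1.
Qed.

Lemma stat_pow P (rho : S -> R) n : (forall s', vmul rho P s' = rho s') ->
  forall s', vmul rho (Ppow P n) s' = rho s'.
Proof.
move=> h; elim: n => [|n IH] s'.
  rewrite /vmul /= (bigD1 s') //= eqxx mulr1 big1 ?addr0 // => u hu.
  by rewrite (negbTE hu) mulr0.
rewrite /vmul /=.
under eq_bigr do rewrite mulr_sumr.
rewrite exchange_big /= -[RHS]h; apply: eq_bigr => u _.
by rewrite -IH /vmul mulr_suml; apply: eq_bigr => w _; rewrite mulrA.
Qed.

Lemma bigmax_ge (I : finType) (F : I -> R) j : F j <= \big[Num.max/0]_i F i.
Proof.
rewrite (bigD1 j) //=.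
have -> : forall x y : R, Num.max x y = if x < y then y else x by [].
by case: ltrP => h //; rewrite ltW.
Qed.

Lemma tv_ge (r1 r2 : S -> R) (M : pred S) :
  `|\sum_(x | M x) r1 x - \sum_(x | M x) r2 x| <= tv r1 r2.
Proof.
rewrite /tv.
have -> : \sum_(x | M x) r1 x - \sum_(x | M x) r2 x =
   \sum_(x in [set z | M z]) r1 x - \sum_(x in [set z | M z]) r2 x.
  by congr (_ - _); apply: eq_bigl => z; rewrite inE.
exact: (bigmax_ge (fun M : {set S} => `|\sum_(x in M) r1 x - \sum_(x in M) r2 x|) [set z | M z]).
Qed.

Lemma mix_D P rho t : mixing_ok P rho t ->
  forall x y (M : pred S),
  \sum_(z | M z) Ppow P t x z - \sum_(z | M z) Ppow P t y z <= 1/2.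
Proof.
move=> h x y M.
have h1 := le_trans (@tv_ge (fun w => Ppow P t x w) rho M) (h x).
have h2 := le_trans (@tv_ge (fun w => Ppow P t y w) rho M) (h y).
move: h1 h2; rewrite !ler_norml => /andP[a1 a2] /andP[b1 b2]; lra.
Qed.

Lemma mix_Lp P rho t u : mixing_ok P rho t ->
  Lp (fun s => Ppow P t u s - rho s) <= 1/4.
Proof.
move=> h; rewrite Lp_pos.
apply: le_trans (h u); apply: le_trans (@tv_ge _ _ (fun s => 0 <= Ppow P t u s - rho s)).
by rewrite sumrB ler_norm.
Qed.

Lemma decay P rho t u (s0 : S) : stoch P -> is_stationary P rho -> mixing_ok P rho t ->
  forall k, Lp (fun s => Ppow P (k * t) u s - rho s) <= (1/2) ^+ k.
Proof.
move=> hP [r0 [r1 r2]] hm; elim => [|k IH].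
  rewrite expr0 mul0n; apply: (@le_trans _ _ (Lp (fun s => Ppow P 0 u s))).
    by apply: Lp_le => s; rewrite lerBlDr lerDl.
  rewrite Lp_nneg; last by move=> s; rewrite /= ler0n.
  by have [_ ->] := Ppow_stoch 0 hP.
have hst := stat_pow (P := P) (rho := rho) t r2.
have -> : Lp (fun s => Ppow P (k.+1 * t) u s - rho s) =
          Lp (vmul (fun s => Ppow P (k * t) u s - rho s) (Ppow P t)).
  apply: Lp_ext => s; rewrite mulSnr Ppow_add /vmul -[in LHS](hst s) /vmul -sumrB.
  by apply: eq_bigr => w _; rewrite mulrBl.
apply: le_trans (Lp_key s0 (Ppow_stoch t hP) _ (mix_D hm)) _.
  have [_ h1] := Ppow_stoch (k * t) hP.
  by rewrite sumrB h1 r1 subrr.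
rewrite exprS ler_wpM2l //; lra.
Qed.

End Pow.
Section MDPdet.
Variables (R : realType) (S A : finType).
Variable (T : S -> A -> S -> R).
Hypothesis kT : is_kernel T.

Lemma Pmat_det (piE : S -> A) s s' : Pmat T (det_pol R piE) s s' = T s (piE s) s'.
Proof.
rewrite /Pmat /det_pol (bigD1 (piE s)) //= eqxx mul1r big1 ?addr0 // => a ha.
by rewrite (negbTE ha) mul0r.
Qed.

Lemma det_policy (piE : S -> A) : is_policy (det_pol R piE).
Proof.
split=> [s a|s]; first by rewrite /det_pol ler0n.
rewrite /det_pol (bigD1 (piE s)) //= eqxx big1 ?addr0 // => a ha.
by rewrite (negbTE ha).
Qed.

Lemma stoch_Pmat (pol : S -> A -> R) : is_policy pol -> stoch (Pmat T pol).
Proof.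
case: kT => T0 T1 [p0 p1]; split=> [s s'|s].
  by apply: sumr_ge0 => a _; rewrite mulr_ge0.
rewrite /Pmat exchange_big /= -(p1 s); apply: eq_bigr => a _.
by rewrite -mulr_sumr T1 mulr1.
Qed.

Lemma pol_split (pol : S -> A -> R) (G : A -> R) s a0 : is_policy pol -> (forall a, 0 <= G a <= 1) ->
  [/\ 0 <= pol s a0, pol s a0 <= 1, pol s a0 * G a0 <= \sum_a pol s a * G a &
      \sum_a pol s a * G a <= pol s a0 * G a0 + (1 - pol s a0)].
Proof.
move=> [p0 p1] hG.
have e1 : pol s a0 + \sum_(a | a != a0) pol s a = 1.
  by rewrite -(p1 s) [in RHS](bigD1 a0).
have r0 : 0 <= \sum_(a | a != a0) pol s a * G a.
  by apply: sumr_ge0 => a _; rewrite mulr_ge0 //; case/andP: (hG a).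
have r1 : \sum_(a | a != a0) pol s a * G a <= \sum_(a | a != a0) pol s a.
  apply: ler_sum => a _; rewrite -[X in _ <= X]mulr1 ler_wpM2l //; by case/andP: (hG a).
have q0 : 0 <= \sum_(a | a != a0) pol s a by apply: sumr_ge0.
have e2 : \sum_a pol s a * G a = pol s a0 * G a0 + \sum_(a | a != a0) pol s a * G a.
  by rewrite (bigD1 a0).
have := p0 s a0; case/andP: (hG a0) => g0 g1.
rewrite e2; split => //; try lra; nra.
Qed.

Variables (piE : S -> A) (piI : S -> A -> R) (rhoI rhoE : S -> R).
Hypothesis hpiI : is_policy piI.
Hypothesis hrhoI : is_stationary (Pmat T piI) rhoI.
Hypothesis hrhoE : is_stationary (Pmat T (det_pol R piE)) rhoE.

Definition beta := \sum_s rhoI s * (1 - piI s (piE s)).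
Notation PE := (Pmat T (det_pol R piE)).

Lemma step_bound : Lp (fun z => rhoI z - vmul rhoI PE z) <= beta.
Proof.
case: hrhoI => r0 [r1 r2]; case: kT => T0 T1.
pose g s z := \sum_(a | a != piE s) piI s a * T s a z.
apply: (@le_trans _ _ (Lp (fun z => \sum_s rhoI s * g s z))).
  apply: Lp_le => z; rewrite -{1}r2 /vmul -sumrB; apply: ler_sum => s _.
  rewrite -mulrBr ler_wpM2l // Pmat_det /Pmat (bigD1 (piE s)) //= -/(g s z).
  have [p0 p1 _ _] := @pol_split piI (fun _ => 1) s (piE s) hpiI (fun _ => ltac:(by rewrite ler01 lexx)).
  have := T0 s (piE s) z; nra.
rewrite Lp_nneg; last first.
  move=> z; apply: sumr_ge0 => s _; rewrite mulr_ge0 //.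
  by apply: sumr_ge0 => a _; rewrite mulr_ge0 //; case: hpiI.
rewrite exchange_big /beta le_eqVlt; apply/orP; left; apply/eqP.
apply: eq_bigr => s _; rewrite -mulr_sumr; congr (_ * _).
rewrite /g exchange_big /=.
have e1 : piI s (piE s) + \sum_(a | a != piE s) piI s a = 1.
  by case: hpiI => _ p1; rewrite -(p1 s) [in RHS](bigD1 (piE s)).
rewrite -e1 addrC addKr; apply: eq_bigr => a _.
by rewrite -mulr_sumr T1 mulr1.
Qed.
Lemma vmul_Ppow0 (P : S -> S -> R) (v : S -> R) z : vmul v (Ppow P 0) z = v z.
Proof.
rewrite /vmul /= (bigD1 z) //= eqxx mulr1 big1 ?addr0 // => u hu.
by rewrite (negbTE hu) mulr0.
Qed.

Lemma nstep n : Lp (fun z => rhoI z - vmul rhoI (Ppow PE n) z) <= n%:R * beta.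
Proof.
elim: n => [|n IH].
  rewrite (@Lp_ext _ _ _ (fun _ => 0)); last by move=> z; rewrite vmul_Ppow0 subrr.
  by rewrite Lp_nneg // big1 // mul0r.
pose c z := rhoI z - vmul rhoI PE z.
rewrite (@Lp_ext _ _ _ (fun z => (rhoI z - vmul rhoI (Ppow PE n) z) + vmul c (Ppow PE n) z)); last first.
  move=> z; rewrite /c /vmul.
  have -> : \sum_s (rhoI s - \sum_s0 rhoI s0 * PE s0 s) * Ppow PE n s z =
    \sum_s rhoI s * Ppow PE n s z - \sum_s rhoI s * Ppow PE n.+1 s z.
    under eq_bigr do rewrite mulrBl.
    rewrite sumrB; congr (_ - _).
    transitivity (\sum_s \sum_s0 rhoI s0 * (PE s0 s * Ppow PE n s z)).
      by apply: eq_bigr => s _; rewrite mulr_suml; apply: eq_bigr => s0 _; rewrite mulrA.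
    rewrite exchange_big; apply: eq_bigr => s0 _; by rewrite PpowSl mulr_sumr.
  ring.
apply: le_trans (Lp_add _ _) _.
rewrite -natr1 mulrDl mul1r; apply: lerD => //.
apply: le_trans (Lp_contract _ (Ppow_stoch n (stoch_Pmat (det_policy piE)))) _.
exact: step_bound.
Qed.

Lemma sdist (s0 : S) tau : mixing_ok PE rhoE tau ->
  Lp (fun z => rhoI z - rhoE z) <= 2 * tau%:R * beta.
Proof.
move=> hm.
case: hrhoE => e0 [e1 e2]; case: hrhoI => i0 [i1 i2].
have hst := stat_pow (P := PE) (rho := rhoE) tau e2.
set L := Lp _.
have h1 : L <= Lp (vmul (fun z => rhoI z - rhoE z) (Ppow PE tau)) +
               Lp (fun z => rhoI z - vmul rhoI (Ppow PE tau) z).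
  apply: le_trans (Lp_add _ _); rewrite le_eqVlt; apply/orP; left; apply/eqP.
  apply: Lp_ext => z; rewrite /vmul.
  under eq_bigr do rewrite mulrBl.
  rewrite sumrB; have := hst z; rewrite /vmul => ->; ring.
have h2 := Lp_key s0 (Ppow_stoch tau (stoch_Pmat (det_policy piE)))
                  (v := fun z => rhoI z - rhoE z) (D := 1/2)
                  ltac:(by rewrite sumrB i1 e1 subrr) (mix_D hm).
have h3 := nstep tau.
have h4 : 0 <= L by exact: Lp_ge0.
rewrite -/L in h2; rewrite -mulrA; lra.
Qed.

Lemma sa_bound1 (F : S -> A -> R) : (forall s a, 0 <= F s a <= 1) ->
  \sum_s \sum_a (rhoE s * det_pol R piE s a - rhoI s * piI s a) * F s a
  <= Lp (fun z => rhoE z - rhoI z) + beta.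
Proof.
move=> hF; rewrite /Lp /beta -big_split; apply: ler_sum => s _ /=.
have [p0 p1 p2 p3] := @pol_split piI (F s) s (piE s) hpiI (hF s).
have eE : \sum_a rhoE s * det_pol R piE s a * F s a = rhoE s * F s (piE s).
  rewrite (bigD1 (piE s)) //= /det_pol eqxx mulr1 big1 ?addr0 // => a ha.
  by rewrite (negbTE ha) mulr0 mul0r.
have eI : \sum_a rhoI s * piI s a * F s a = rhoI s * \sum_a piI s a * F s a.
  by rewrite mulr_sumr; apply: eq_bigr => a _; rewrite mulrA.
under eq_bigr do rewrite mulrBl.
rewrite sumrB eE eI.
case: hrhoE => e0 _; case: hrhoI => i0 _.
have := e0 s; have := i0 s; case/andP: (hF s (piE s)) => f0 f1.
move=> r0 r1.
set Sg := \sum_a piI s a * F s a.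
have k1 : 0 <= rhoI s * (Sg - piI s (piE s) * F s (piE s)) by rewrite mulr_ge0 // subr_ge0.
have k2 : 0 <= rhoI s * ((1 - piI s (piE s)) * (1 - F s (piE s))).
  by rewrite !mulr_ge0 // subr_ge0.
rewrite maxE0; case: ltrP => h.
  have k3 : 0 <= (rhoI s - rhoE s) * F s (piE s) by rewrite mulr_ge0 // subr_ge0 ltW // -subr_lt0.
  lra.
have k3 : 0 <= (rhoE s - rhoI s) * (1 - F s (piE s)) by rewrite mulr_ge0 // subr_ge0.
lra.
Qed.

Lemma sa_bound2 (F : S -> A -> R) : (forall s a, 0 <= F s a <= 1) ->
  \sum_s \sum_a (rhoI s * piI s a - rhoE s * det_pol R piE s a) * F s a
  <= Lp (fun z => rhoI z - rhoE z) + beta.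
Proof.
move=> hF; rewrite /Lp /beta -big_split; apply: ler_sum => s _ /=.
have [p0 p1 p2 p3] := @pol_split piI (F s) s (piE s) hpiI (hF s).
have eE : \sum_a rhoE s * det_pol R piE s a * F s a = rhoE s * F s (piE s).
  rewrite (bigD1 (piE s)) //= /det_pol eqxx mulr1 big1 ?addr0 // => a ha.
  by rewrite (negbTE ha) mulr0 mul0r.
have eI : \sum_a rhoI s * piI s a * F s a = rhoI s * \sum_a piI s a * F s a.
  by rewrite mulr_sumr; apply: eq_bigr => a _; rewrite mulrA.
under eq_bigr do rewrite mulrBl.
rewrite sumrB eE eI.
case: hrhoE => e0 _; case: hrhoI => i0 _.
have := e0 s; have := i0 s; case/andP: (hF s (piE s)) => f0 f1.
move=> r0 r1.
set Sg := \sum_a piI s a * F s a.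
have k1 : 0 <= rhoI s * (piI s (piE s) * F s (piE s) + (1 - piI s (piE s)) - Sg).
  by rewrite mulr_ge0 // subr_ge0.
have k2 : 0 <= rhoI s * (F s (piE s) * (1 - piI s (piE s))).
  by rewrite !mulr_ge0 // subr_ge0.
rewrite maxE0; case: ltrP => h.
  have k3 : 0 <= (rhoE s - rhoI s) * F s (piE s) by rewrite mulr_ge0 // subr_ge0 ltW // -subr_lt0.
  lra.
have k3 : 0 <= (rhoI s - rhoE s) * (1 - F s (piE s)) by rewrite mulr_ge0 // subr_ge0.
lra.
Qed.

End MDPdet.
Lemma bigmax_le0 (R : realType) (I : finType) (F : I -> R) c :
  0 <= c -> (forall i, F i <= c) -> \big[Num.max/0]_i F i <= c.
Proof.
move=> c0 hF; elim/big_ind: _ => // x y hx hy.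
have -> : Num.max x y = if x < y then y else x by [].
by case: ifP.
Qed.

Lemma ind01 (R : realType) (b : bool) : 0 <= (b%:R : R) <= 1.
Proof. by case: b; rewrite /= ?lexx ?ler01. Qed.

Section Good.
Variables (R : realType) (S A : finType).
Variable (T : S -> A -> S -> R).
Hypothesis kT : is_kernel T.
Variables (piE : S -> A) (rhoE : S -> R).
Notation PE := (Pmat T (det_pol R piE)).

Lemma good_of (s0 : S) tau (eta : R) N (x : N.-tuple S) :
  irreducible PE -> aperiodic PE -> is_stationary PE rhoE -> mixing_ok PE rhoE tau ->
  (2 * tau%:R + 1) * (\sum_(s | s \notin x) rhoE s) <= eta ->
  good_event T piE rhoE eta x.
Proof.
move=> irrE apE stE mixE heps piI rhoI pI irrI apI stI maxI.
have hmax := maxI _ _ (det_policy R piE) irrE apE stE.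
case: (stE) => e0 [e1 e2]; case: (stI) => i0 [i1 i2].
set eps := \sum_(s | s \notin x) rhoE s in heps.
have hE : expect rhoE (det_pol R piE) (Defs.Rint piE x) = 1 - eps.
  have -> : 1 - eps = \sum_(s | s \in x) rhoE s by rewrite -e1 (bigID (fun s => s \in x)) /= addrK.
  rewrite /expect [LHS](bigID (fun s => s \in x)) /= [X in _ + X]big1 ?addr0.
    apply: eq_bigr => s hs; rewrite (bigD1 (piE s)) //= /det_pol /Defs.Rint hs eqxx !mulr1.
    by rewrite big1 ?addr0 // => a ha; rewrite (negbTE ha) ?mulr0 ?mul0r.
  move=> s hs; apply: big1 => a _; rewrite /Defs.Rint (negbTE hs) /= mulr0 //.
have hI : expect rhoI piI (Defs.Rint piE x) <= 1 - beta piE piI rhoI.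
  rewrite /beta -i1 -sumrB; apply: ler_sum => s _.
  rewrite (bigD1 (piE s)) //= big1 ?addr0; last first.
    by move=> a ha; rewrite /Defs.Rint (negbTE ha) andbF mulr0.
  rewrite /Defs.Rint eqxx andbT; case: pI => p0 _; have := p0 s (piE s); have := i0 s.
  case: (s \in x) => /=; rewrite ?mulr1 ?mulr0; nra.
have hb : beta piE piI rhoI <= eps by move: hmax; rewrite hE; lra.
have hL := sdist kT pI stI stE s0 mixE.
have hL' : Lp (fun z => rhoE z - rhoI z) <= 2 * tau%:R * beta piE piI rhoI.
  rewrite (@Lp_ext _ _ _ (fun z => - (rhoI z - rhoE z))); last by move=> z; rewrite opprB.
  by rewrite (@Lp_opp _ _ (fun z => rhoI z - rhoE z)) // sumrB i1 e1 subrr.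
have ht : 0 <= tau%:R :> R by rewrite ler0n.
have hbe : (2 * tau%:R + 1) * beta piE piI rhoI <= eta.
  apply: le_trans heps; rewrite ler_wpM2l //; lra.
have key : forall F : S -> A -> R, (forall s a, 0 <= F s a <= 1) ->
  `|\sum_s \sum_a (rhoE s * det_pol R piE s a - rhoI s * piI s a) * F s a| <= eta.
  move=> F hF; rewrite ler_norml; apply/andP; split.
    have := sa_bound2 pI stI stE hF.
    have -> : \sum_s \sum_a (rhoI s * piI s a - rhoE s * det_pol R piE s a) * F s a =
      - \sum_s \sum_a (rhoE s * det_pol R piE s a - rhoI s * piI s a) * F s a.
      rewrite -sumrN; apply: eq_bigr => s _; rewrite -sumrN; apply: eq_bigr => a _.
      by ring.
    lra.
  have := sa_bound1 pI stI stE hF; lra.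
split.
  have b0 : 0 <= beta piE piI rhoI.
    rewrite /beta; apply: sumr_ge0 => s _; apply: mulr_ge0 => //; rewrite subr_ge0.
    by have [_ ? _ _] := @pol_split _ _ _ piI (fun _ => 1) s (piE s) pI (fun _ => ltac:(by rewrite ler01 lexx)).
  apply: bigmax_le0 => [|M]; first by apply: le_trans hbe; apply: mulr_ge0 => //; lra.
  have := key (fun s a => ((s, a) \in M)%:R) (fun s a => ind01 R ((s, a) \in M)).
  congr (`|_| <= _).
  rewrite -sumrB pair_bigA /= [LHS](bigID (fun p => p \in M)) /= [X in _ + X]big1 ?addr0.
    by apply: eq_bigr => -[s a] /= ->; rewrite mulr1.
  by move=> [s a] /= /negbTE ->; rewrite mulr0.
move=> Rw hRw.
have := key Rw hRw; rewrite ler_norml => /andP[_ h].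
suff e : expect rhoE (det_pol R piE) Rw - expect rhoI piI Rw =
  \sum_s \sum_a (rhoE s * det_pol R piE s a - rhoI s * piI s a) * Rw s a by lra.
rewrite /expect -sumrB; apply: eq_bigr => s _; rewrite -sumrB; apply: eq_bigr => a _.
by rewrite mulrBl.
Qed.

End Good.
Section TupleSum.
Variables (R : realType) (S : finType).

Lemma tuple_sum0 (F : 0.-tuple S -> R) : \sum_y F y = F [tuple].
Proof. by rewrite (big_pred1 [tuple]) // => y; apply/esym/eqP; apply: tuple0. Qed.

Lemma tuple_sumS n (F : n.+1.-tuple S -> R) :
  \sum_y F y = \sum_v \sum_(z : n.-tuple S) F [tuple of v :: z].
Proof.
rewrite pair_bigA /=.
rewrite (reindex (fun p : S * n.-tuple S => [tuple of p.1 :: p.2])) //=.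
exists (fun y : n.+1.-tuple S => (thead y, [tuple of behead y])) => [[v z]|y] _ /=.
  by congr (_, _); apply: val_inj.
by rewrite -tuple_eta.
Qed.

End TupleSum.

Section Traj.
Variables (R : realType) (S A : finType).
Variable (T : S -> A -> S -> R).
Hypothesis kT : is_kernel T.
Variables (piE : S -> A) (s1 : S).
Notation PE := (Pmat T (det_pol R piE)).

Definition Qp (u : S) (y : seq S) : R :=
  \prod_(0 <= k < size y) PE (nth s1 (u :: y) k) (nth s1 y k).

Lemma Qp_nil u : Qp u [::] = 1.
Proof. by rewrite /Qp big_geq. Qed.

Lemma Qp_cons u v z : Qp u (v :: z) = PE u v * Qp v z.
Proof. by rewrite /Qp /= big_nat_recl. Qed.

Lemma traj_cons n (u : S) (y : n.-tuple S) :
  traj_prob T s1 piE [tuple of u :: y] = (u == s1)%:R * Qp u y.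
Proof.
rewrite /traj_prob /= /Qp size_tuple; congr (_ * _).
rewrite big_add1 /=; apply: eq_bigr => k _.
by rewrite Pmat_det.
Qed.

Definition Kk (W : {set S}) (a b : S) : R := PE a b * (b \notin W)%:R.

Lemma avoid_sum (W : {set S}) n u :
  \sum_(y : n.-tuple S) (all (fun s => s \notin W) y)%:R * Qp u y =
  \sum_v Ppow (Kk W) n u v.
Proof.
elim: n u => [|n IH] u.
  rewrite tuple_sum0 /= Qp_nil mulr1.
  rewrite (bigD1 u) //= eqxx big1 ?addr0 // => v hv.
  by rewrite eq_sym (negbTE hv).
rewrite tuple_sumS.
transitivity (\sum_v Kk W u v * \sum_v' Ppow (Kk W) n v v').
  apply: eq_bigr => v _; rewrite -IH mulr_sumr; apply: eq_bigr => z _.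
  by rewrite /= Qp_cons /Kk; case: (v \notin W) => /=; ring.
under [RHS]eq_bigr do rewrite PpowSl.
rewrite exchange_big /=; apply: eq_bigr => v _; by rewrite mulr_sumr.
Qed.

Lemma traj_avoid (W : {set S}) n :
  \sum_(x : n.+1.-tuple S) (all (fun s => s \notin W) x)%:R * traj_prob T s1 piE x =
  (s1 \notin W)%:R * \sum_v Ppow (Kk W) n s1 v.
Proof.
rewrite tuple_sumS (bigD1 s1) //= [X in _ + X]big1 ?addr0; last first.
  move=> u hu; apply: big1 => z _; rewrite traj_cons (negbTE hu) mul0r mulr0 //.
rewrite -avoid_sum mulr_sumr; apply: eq_bigr => z _.
by rewrite traj_cons eqxx /=; case: (s1 \notin W) => /=; ring.
Qed.

End Traj.
Section Killed.
Variables (R : realType) (S : finType).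
Variables (P : S -> S -> R) (W : {set S}).
Hypothesis hP : stoch P.
Definition Kil (a b : S) : R := P a b * (b \notin W)%:R.

Lemma K_le n a b : 0 <= Ppow Kil n a b <= Ppow P n a b.
Proof.
case: hP => P0 P1.
elim: n b => [|n IH] b; first by apply/andP; split; [exact: ler0n | exact: lexx].
rewrite /=; apply/andP; split.
  apply: sumr_ge0 => u _; case/andP: (IH u) => h _; rewrite mulr_ge0 // /Kil mulr_ge0 // ler0n.
apply: ler_sum => u _; case/andP: (IH u) => h1 h2.
apply: le_trans (_ : Ppow Kil n a u * P u b <= _); last by rewrite ler_wpM2r.
rewrite ler_wpM2l // /Kil; case: (b \notin W) => /=; rewrite ?mulr1n ?mulr0n ?mulr1 ?mulr0 //.
Qed.

Lemma K_zero n a b : b \in W -> Ppow Kil n.+1 a b = 0.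
Proof. by move=> hb; rewrite /= big1 // => u _; rewrite /Kil hb /= mulr0 mulr0. Qed.

Lemma K_row t a : (0 < t)%N ->
  \sum_b Ppow Kil t a b <= 1 - \sum_(b in W) Ppow P t a b.
Proof.
case: t => [//|t] _.
have [_ h1] := Ppow_stoch t.+1 hP.
have -> : 1 - \sum_(b in W) Ppow P t.+1 a b = \sum_(b | b \notin W) Ppow P t.+1 a b.
  by rewrite -(h1 a) (bigID (fun b => b \in W)) /=; ring.
rewrite [X in X <= _](bigID (fun b => b \in W)) big1 ?Monoid.simpm.
  by apply: ler_sum => b _; case/andP: (K_le t.+1 a b).
by move=> b hb; rewrite K_zero.
Qed.

Lemma G_add m n a :
  \sum_b Ppow Kil (m + n) a b = \sum_c Ppow Kil m a c * \sum_b Ppow Kil n c b.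
Proof.
under eq_bigr do rewrite Ppow_add.
rewrite exchange_big /=; apply: eq_bigr => c _; by rewrite mulr_sumr.
Qed.

Lemma G_decay t (q : R) : (forall a, \sum_b Ppow Kil t a b <= q) ->
  forall k r a, \sum_b Ppow Kil (k * t + r) a b <= q ^+ k.
Proof.
move=> hq; elim => [|k IH] r a.
  rewrite mul0n add0n expr0; have [_ h1] := Ppow_stoch r hP.
  rewrite -(h1 a); apply: ler_sum => b _; by case/andP: (K_le r a b).
have q0 : 0 <= q.
  apply: le_trans (hq a); apply: sumr_ge0 => b _; by case/andP: (K_le t a b).
have -> : (k.+1 * t + r = t + (k * t + r))%N by lia.
rewrite G_add.
apply: (@le_trans _ _ (\sum_c Ppow Kil t a c * q ^+ k)).
  apply: ler_sum => c _; rewrite ler_wpM2l ?IH //; by case/andP: (K_le t a c).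
by rewrite -mulr_suml exprS ler_wpM2r ?exprn_ge0.
Qed.

End Killed.
Section Prob.
Variables (R : realType) (S A : finType).
Variable (T : S -> A -> S -> R).
Hypothesis kT : is_kernel T.
Variables (piE : S -> A) (rhoE : S -> R) (s1 : S).
Notation PE := (Pmat T (det_pol R piE)).
Hypothesis stE : is_stationary PE rhoE.

Lemma total_prob n : \sum_(x : n.+1.-tuple S) traj_prob T s1 piE x = 1.
Proof.
have := traj_avoid T piE s1 set0 n.
rewrite in_set0 /= mul1r.
rewrite (eq_bigr (fun x => traj_prob T s1 piE x)); last first.
  move=> x _; have -> : all (fun s => s \notin set0) x by apply/allP => s _; rewrite in_set0.
  by rewrite mul1r.
move=> ->.
have [_ h1] := Ppow_stoch n (stoch_Pmat kT (det_policy R piE)).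
rewrite -(h1 s1); apply: eq_bigr => v _.
have e : forall m a b, Ppow (Kk T piE set0) m a b = Ppow PE m a b.
  elim=> [|m IH] a b //=; apply: eq_bigr => u _; rewrite IH /Kk in_set0 /= mulr1 //.
exact: e.
Qed.

Lemma avoid_bound tau k (eps0 : R) (W : {set S}) n :
  mixing_ok PE rhoE tau -> (0 < k * tau)%N ->
  (1/2) ^+ k <= eps0 / 2 -> eps0 <= \sum_(b in W) rhoE b ->
  \sum_(x : n.+1.-tuple S) (all (fun s => s \notin W) x)%:R * traj_prob T s1 piE x
   <= (1 - eps0 / 2) ^+ (n %/ (k * tau)).
Proof.
move=> hm ht hk hW.
have hP := stoch_Pmat kT (det_policy R piE).
case: (stE) => e0 [e1 e2].
rewrite traj_avoid.
have hKK : forall m a b, Ppow (Kk T piE W) m a b = Ppow (Kil PE W) m a b by [].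
have G0 : 0 <= \sum_v Ppow (Kk T piE W) n s1 v.
  by apply: sumr_ge0 => v _; rewrite hKK; case/andP: (K_le W hP n s1 v).
apply: (@le_trans _ _ (\sum_v Ppow (Kk T piE W) n s1 v)).
  by case: (s1 \notin W) => /=; rewrite ?mul1r ?mul0r ?lexx.
under eq_bigr do rewrite hKK.
rewrite {1}(divn_eq n (k * tau)).
apply: G_decay => // a.
apply: le_trans (K_row W hP a ht) _.
suff : eps0 / 2 <= \sum_(b in W) Ppow PE (k * tau) a b by lra.
have hd := decay a s1 hP stE hm k.
have hz : \sum_s (Ppow PE (k * tau) a s - rhoE s) = 0.
  by have [_ h1] := Ppow_stoch (k * tau) hP; rewrite sumrB h1 e1 subrr.
have hl := @sum_le_Lp _ _ (fun b => - (Ppow PE (k * tau) a b - rhoE b)) (fun b => b \in W).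
rewrite (@Lp_opp _ _ (fun b => Ppow PE (k * tau) a b - rhoE b)) // in hl.
have : \sum_(b in W) - (Ppow PE (k * tau) a b - rhoE b) =
       \sum_(b in W) rhoE b - \sum_(b in W) Ppow PE (k * tau) a b.
  by rewrite -sumrB; apply: eq_bigr => b _; rewrite opprB.
lra.
Qed.

End Prob.
Lemma numeric (R : realType) (s tt e L n B t M : R) :
  1 <= s -> 1 <= tt -> 0 < e -> e < 3 * tt -> 0 <= L -> 0 < t ->
  e * t <= 9 * tt ^+ 2 ->
  n + 1 <= (B + 1) * t ->
  M * tt ^+ 3 <= e ^+ 2 * (n + 1) ->
  400 * s + 225 * L <= M ->
  6 * tt * (s + L) <= e * B.
Proof.
move=> s1 tt1 e0 e3 L0 t0 et nB hM hM2.
have et0 : 0 < e * t by rewrite mulr_gt0.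
have h1 : e ^+ 2 * (n + 1) <= e ^+ 2 * ((B + 1) * t) by rewrite ler_wpM2l // exprn_ge0 // ltW.
have h2 : e ^+ 2 * t <= 27 * tt ^+ 3.
  have : e * (e * t) <= (3 * tt) * (9 * tt ^+ 2).
    apply: ler_pM => //; [exact: ltW | exact: ltW | exact: ltW].
  rewrite expr2 !exprS expr0; lra.
have tt3 : 1 <= tt ^+ 3 by rewrite exprn_ege1.
have h3 : (400 * s + 225 * L) * tt ^+ 3 <= M * tt ^+ 3 by rewrite ler_wpM2r // ?exprn_ge0 // ltW // (lt_le_trans ltr01).
have h4 : 6 * tt * (s + L) * (e * t) <= 6 * tt * (s + L) * (9 * tt ^+ 2).
  apply: ler_wpM2l => //; apply: mulr_ge0; lra.
have h5 : 6 * tt * (s + L) * (9 * tt ^+ 2) = 54 * (s + L) * tt ^+ 3.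
  by rewrite !exprS expr0; ring.
have h6 : 54 * (s + L) * tt ^+ 3 + 27 * tt ^+ 3 <= (400 * s + 225 * L) * tt ^+ 3.
  rewrite -mulrDl ler_wpM2r // ?exprn_ge0 //; lra.
have h7 : e ^+ 2 * ((B + 1) * t) = (e * B) * (e * t) + e ^+ 2 * t by rewrite expr2; ring.
rewrite -(ler_pM2r et0); lra.
Qed.
Lemma expo (R : realType) (s B : nat) (eps0 delta : R) :
  0 <= 1 - eps0 / 2 -> 0 < delta ->
  s%:R + ln (2 / delta) <= eps0 / 2 * B%:R ->
  2 ^+ s * (1 - eps0 / 2) ^+ B <= delta.
Proof.
move=> q0 d0 h.
set q := 1 - eps0 / 2.
have hq : q <= expR (- (eps0 / 2)) by rewrite /q (le_trans _ (expR_ge1Dx _)).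
have hqB : q ^+ B <= expR (- (eps0 / 2)) ^+ B.
  by apply: lerXn2r => //; rewrite qualifE /= ?expR_ge0.
rewrite -expRM_natl in hqB.
have h2 : expR (B%:R * - (eps0 / 2)) <= expR (- (s%:R + ln (2 / delta))).
  by rewrite ler_expR; lra.
have d2 : 0 < 2 / delta by rewrite divr_gt0.
rewrite expRN expRD lnK ?qualifE //= in h2.
have e2 : 2 <= expR (1 : R) by have := expR_ge1Dx (1 : R); lra.
have hs : 2 ^+ s <= expR (s%:R : R).
  rewrite -[s%:R]mulr1 expRM_natl; apply: lerXn2r => //; rewrite qualifE /= ?expR_ge0 //.
have es0 : 0 < expR (s%:R : R) := expR_gt0 _.
rewrite invfM invf_div in h2.
have hB := le_trans hqB h2.
have h2s : 2 ^+ s / expR (s%:R : R) <= 1 by rewrite ler_pdivrMr // mul1r.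
have p2 : 0 <= 2 ^+ s :> R by rewrite exprn_ge0.
have : 2 ^+ s * q ^+ B <= 2 ^+ s * ((expR (s%:R : R))^-1 * (delta / 2)).
  by rewrite ler_wpM2l.
rewrite mulrA => h3; apply: le_trans h3 _.
have : 2 ^+ s * (expR (s%:R : R))^-1 * (delta / 2) <= 1 * (delta / 2).
  by rewrite ler_wpM2r // divr_ge0 // ltW.
lra.
Qed.
Lemma choose_k (R : realType) (c : R) : 0 < c ->
  exists k : nat, [/\ (0 < k)%N, c < k%:R, k%:R <= c + 1 & c < 2 ^+ k].
Proof.
move=> c0.
have exk : exists k : nat, c < k%:R by exists (Num.Def.archi_bound c); apply: archi_boundP; exact: ltW.
case: (ex_minnP exk) => k hk kmin.
have k1 : (0 < k)%N.
  case: (posnP k) => [k0|//]; rewrite k0 /= in hk; lra.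
exists k; split => //.
  rewrite leNgt; apply/negP => hlt.
  have ek : k%:R = (k.-1)%:R + 1 :> R by rewrite natr1 prednK.
  have : c < (k.-1)%:R by lra.
  by move/kmin; rewrite -ltnS prednK // ltnn.
apply: lt_le_trans hk _; rewrite -natrX ler_nat; apply: ltnW; exact: ltn_expl.
Qed.

Lemma half_pow (R : realType) (c : R) k : 0 < c -> c < 2 ^+ k -> (1 / 2) ^+ k <= c^-1.
Proof.
move=> c0 ck.
have -> : (1 / 2 : R) ^+ k = (2 ^+ k)^-1 by rewrite div1r exprVn.
rewrite lef_pV2 ?posrE ?ltW // exprn_gt0 //.
Qed.

Lemma eps0_eq (R : realType) (eta tt : R) : eta != 0 -> tt != 0 ->
  eta / (3 * tt) / 2 = (6 * tt / eta)^-1.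
Proof. by move=> h1 h2; field; rewrite h1 h2. Qed.
Lemma sum_pred_le (R : realType) (I : finType) (P : pred I) (f : I -> R) :
  (forall i, 0 <= f i) -> \sum_(i | P i) f i <= \sum_i f i.
Proof.
move=> h; rewrite [X in _ <= X](bigID P) /= lerDl; by apply: sumr_ge0.
Qed.

Unset Implicit Arguments.

Theorem proposition1 (R : realType) (S A : finType) (T : S -> A -> S -> R)
  (s1 : S) (piE : S -> A) (rhoE : S -> R) (tau N : nat) (eta delta : R) :
  is_kernel T ->
  irreducible (Pmat T (@det_pol R S A piE)) ->
  aperiodic (Pmat T (@det_pol R S A piE)) ->
  is_stationary (Pmat T (@det_pol R S A piE)) rhoE ->
  is_mixing_time (Pmat T (@det_pol R S A piE)) rhoE tau ->
  0 < eta -> 0 < delta -> delta < 1 -> (1 <= N)%N ->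
  Num.max (800 * #|S|%:R) (450 * ln (2 / delta)) * tau%:R ^+ 3 / eta ^+ 2
    <= N%:R ->
  1 - delta <= \sum_(x : N.-tuple S | `[< good_event T piE rhoE eta x >])
                  traj_prob T s1 piE x.
Proof.
move=> kT irrE apE stE [mixE _] eta0 d0 d1 N1 hN.
case: N N1 hN => [//|n] _ hN.
have hP := stoch_Pmat kT (det_policy R piE).
case: (stE) => e0 [e1 e2].
have traj0 : forall x : n.+1.-tuple S, 0 <= traj_prob T s1 piE x.
  move=> x; rewrite /traj_prob mulr_ge0 ?ler0n //; apply: prodr_ge0 => k _.
  by case: kT => T0 _.
have allgood : (forall x : n.+1.-tuple S, good_event T piE rhoE eta x) ->
   1 - delta <= \sum_(x : n.+1.-tuple S | `[< good_event T piE rhoE eta x >])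
                  traj_prob T s1 piE x.
  move=> hg; rewrite (eq_bigl xpredT); last by move=> x; apply: asboolT.
  rewrite (total_prob kT piE s1); lra.
pose eps (x : n.+1.-tuple S) := \sum_(s | s \notin x) rhoE s.
have eps1 : forall x, eps x <= 1 by move=> x; rewrite -e1; apply: sum_pred_le.
have eps0' : forall x, 0 <= eps x by move=> x; apply: sumr_ge0.
case: (posnP tau) => [tau0 | taupos].
  rewrite tau0 in mixE.
  have eqall : forall y : S, y = s1.
    move=> y; have := mix_D mixE y s1 (pred1 y).
    rewrite !big_pred1_eq /= eqxx.
    case: (eqVneq s1 y) => [-> //|hne] /=; rewrite ?mulr1n ?mulr0n => h.
    exfalso; move: h; lra.
  apply: allgood => x; apply: (good_of kT s1 irrE apE stE mixE).
  rewrite (_ : \sum_(s | s \notin x) rhoE s = 0) ?mulr0 ?ltW //.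
  apply: big1 => s; have := mem_tnth ord0 x.
  by rewrite (eqall (tnth x ord0)) -(eqall s) => ->.
have tt1 : 1 <= tau%:R :> R by rewrite ler1n.
case: (lerP (3 * tau%:R) eta) => [hbig | hsmall].
  apply: allgood => x; apply: (good_of kT s1 irrE apE stE mixE).
  have := eps1 x; have := eps0' x; rewrite /eps => ha hb.
  apply: le_trans hbig; nra.
set tt := tau%:R in tt1 hsmall hN *.
have S0 : (0 < #|S|)%N by apply/card_gt0P; exists s1.
have sS : 1 <= #|S|%:R :> R by rewrite ler1n.
pose eps0 := eta / (3 * tt).
pose c := 6 * tt / eta.
have tt0 : 0 < tt by apply: lt_le_trans tt1; exact: ltr01.
have c0 : 0 < c by rewrite /c divr_gt0 // mulr_gt0.
case: (choose_k c0) => k [k1 _ kle lk].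
have hk2 : (1/2) ^+ k <= eps0 / 2.
  rewrite /eps0 eps0_eq ?gt_eqF //.
  exact: half_pow.
set t := (k * tau)%N.
have t0 : (0 < t)%N by rewrite muln_gt0 k1 taupos.
pose q := 1 - eps0 / 2.
have eps01 : eps0 < 1 by rewrite /eps0 ltr_pdivrMr ?mul1r // mulr_gt0.
have q0 : 0 <= q by rewrite /q; lra.
pose B := (n %/ t)%N.
pose goodp (x : n.+1.-tuple S) := (2 * tt + 1) * eps x <= eta.
have hsplit : 1 - \sum_(x | ~~ goodp x) traj_prob T s1 piE x <=
   \sum_(x : n.+1.-tuple S | `[< good_event T piE rhoE eta x >]) traj_prob T s1 piE x.
  rewrite -(total_prob kT piE s1 n) (bigID goodp) /= addrK.
  rewrite big_mkcond [X in _ <= X]big_mkcond /=; apply: ler_sum => x _.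
  case hg: (goodp x); last by case: ifP.
  by rewrite (asboolT (good_of kT s1 irrE apE stE mixE hg)).
have hbad : \sum_(x | ~~ goodp x) traj_prob T s1 piE x <= 2 ^+ #|S| * q ^+ B.
  apply: (@le_trans _ _ (\sum_(x : n.+1.-tuple S) \sum_(W : {set S} | eps0 <= \sum_(b in W) rhoE b)
       (all (fun s => s \notin W) x)%:R * traj_prob T s1 piE x)).
    rewrite big_mkcond /=; apply: ler_sum => y _.
    case hg: (goodp y) => /=; last first.
      pose Wx := [set s | s \notin y].
      have hWx : eps0 <= \sum_(b in Wx) rhoE b.
        have -> : \sum_(b in Wx) rhoE b = eps y by apply: eq_bigl => b; rewrite inE.
        move/negbT: hg; rewrite /goodp -ltNge => hg2.
        have h3 : 0 < 3 * tt by apply: mulr_gt0 => //; lra.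
        rewrite /eps0 ler_pdivrMr //.
        apply: le_trans (ltW hg2) _; rewrite [X in _ <= X]mulrC ler_wpM2r //; lra.
      rewrite (bigD1 Wx) //= (_ : all _ y = true) ?mul1r.
        by rewrite lerDl; apply: sumr_ge0 => W _; rewrite mulr_ge0.
      by apply/allP => s hs; rewrite inE negbK.
    by apply: sumr_ge0 => W _; rewrite mulr_ge0.
  rewrite exchange_big /=.
  apply: (@le_trans _ _ (\sum_(W : {set S}) q ^+ B)).
    apply: (@le_trans _ _ (\sum_(W : {set S} | eps0 <= \sum_(b in W) rhoE b) q ^+ B)).
      by apply: ler_sum => W hW; apply: (avoid_bound kT s1 stE n mixE t0 hk2 hW).
    by apply: sum_pred_le => W; exact: exprn_ge0.
  rewrite sumr_const -cardsT -powersetT card_powerset cardsT.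
  by rewrite -[X in X <= _]mulr_natr natrX mulrC.
set sR := #|S|%:R : R.
set L := ln (2 / delta).
have L0 : 0 <= L.
  apply: ln_ge0; rewrite ler_pdivlMr // mul1r; lra.
have tR0 : 0 < t%:R :> R by rewrite ltr0n.
have hc : eta * c = 6 * tt by rewrite /c mulrC divfK // gt_eqF.
have hek : eta * k%:R <= 6 * tt + eta.
  have := ler_wpM2l (ltW eta0) kle; rewrite mulrDr mulr1 hc //.
have het : eta * t%:R <= 9 * tt ^+ 2.
  rewrite /t natrM mulrA.
  have := ler_wpM2r (ltW tt0) hek => h; apply: le_trans h _.
  rewrite expr2; nra.
have hnB : (n%:R : R) + 1 <= (B%:R + 1) * t%:R.
  have h : (n.+1 <= B.+1 * t)%N := ltn_ceil n t0.
  have h' : (n.+1%:R : R) <= (B.+1 * t)%:R by rewrite ler_nat.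
  by rewrite natrM -!natr1 in h'.
set M := Num.max (800 * sR) (450 * L) in hN.
have hM : M * tt ^+ 3 <= eta ^+ 2 * (n%:R + 1).
  move: hN; rewrite ler_pdivrMr ?exprn_gt0 // -natr1 => h; by rewrite [X in _ <= X]mulrC.
have hM2 : 400 * sR + 225 * L <= M.
  rewrite /M; have -> : forall x y : R, Num.max x y = if x < y then y else x by [].
  case: ltP => h; lra.
have key := numeric sS tt1 eta0 hsmall L0 tR0 het hnB hM hM2.
have hnum : 2 ^+ #|S| * q ^+ B <= delta.
  apply: expo => //.
  rewrite /eps0 eps0_eq ?gt_eqF // invf_div mulrAC ler_pdivlMr ?mulr_gt0 //.
  rewrite -/sR -/L; lra.
lra.
Qed.
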